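(* Let $\mathcal{G}=(\mathcal{V},\mathcal{E})$ be a connected non-bipartite graph with node set $\mathcal{V}=\{1,\dots,N\}$, and let $\tilde{\mathcal{G}}=(\tilde{\mathcal{V}},\tilde{\mathcal{E}})$ be $\mathcal{G}$ with a self-loop added at every node, with adjacency matrix $\tilde A$ and diagonal degree matrix $\tilde D$. For $u\in\mathcal{V}$ let $\mathcal{N}(u)$ be the set of neighbours of $u$ in $\tilde{\mathcal{G}}$ and $\deg(u)=|\mathcal{N}(u)|$ (so $\tilde D=\operatorname{diag}(\deg(1),\dots,\deg(N))$). Random environment: let $\vec\xi=(\Theta^{(1)},\Theta^{(2)},\dots)$ be a sequence of independent, identically distributed random $\{0,1\}^{N\times N}$ matrices with entries $\theta^{(l)}(u,v)$, where $\theta^{(l)}(u,v)=0$ if $(u,v)\notin\tilde{\mathcal{E}}$, and for $(u,v)\in\tilde{\mathcal{E}}$, $\theta^{(l)}(u,v)$ is Bernoulli with $\mathbf P(\theta^{(l)}(u,v)=0)=\frac{1}{|\mathcal{E}|}$, $\mathbf P(\theta^{(l)}(u,v)=1)=1-\frac{1}{|\mathcal{E}|}$; for each $u$ the variables $\theta^{(l)}(u,v)$, $v\in\mathcal{N}(u)$, are independent. Let $\zeta^{(l)}_u=\sum_{v\in\mathcal{N}(u)}\theta^{(l)}(u,v)$ (so $\zeta^{(l)}_u$ is Binomial$(\deg(u),1-\frac1{|\mathcal{E}|})$), and define the random transition matrix $P(\Theta^{(l)})$ by $p(\Theta^{(l)};u,v)=\theta^{(l)}(u,v)/\zeta^{(l)}_u$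 when $\zeta^{(l)}_u>0$, and $p(\Theta^{(l)};u,\cdot)=\delta_u$ (the walk stays at $u$) when $\zeta^{(l)}_u=0$. Let $\vec V=(V_0,V_1,\dots)$ be a $\mathcal{V}$-valued process such that $(\vec V,\vec\xi)$ is a Markov chain in a random environment, i.e. for all $l\ge 1$ and $v_0,\dots,v_l\in\mathcal{V}$, $\mathbf P(V_l=v_l\mid V_0=v_0,\dots,V_{l-1}=v_{l-1},\vec\xi)=p(\Theta^{(l)};v_{l-1},v_l)$. Then, under the law $\mathbf P$ (averaging over the environment), $\vec V$ is a time-homogeneous Markov chain with transition matrix $$P_{\mathrm{drop}}=(I-\Gamma)\tilde D^{-1}\tilde A+\Gamma,\qquad \Gamma=\operatorname{diag}\Big(\tfrac{1}{|\mathcal{E}|^{\deg(1)}},\dots,\tfrac{1}{|\mathcal{E}|^{\deg(N)}}\Big).$$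
   Context: This models the DropEdge method applied to GCN: at each layer every edge of $\tilde{\mathcal G}$ is independently dropped, and message passing uses the row-normalized dropped adjacency matrix. $|\mathcal{E}|$ is the number of edges of $\mathcal{G}$. *)

(* Defs.v *)
From HB Require Import structures.
From mathcomp Require Import all_boot all_order all_algebra.
From mathcomp Require Import all_classical all_reals all_analysis.
Set Implicit Arguments. Unset Strict Implicit. Unset Printing Implicit Defensive.
Import Order.TTheory GRing.Theory Num.Theory.
Local Open Scope ring_scope.

Section Graph.
Variable N : nat.
Variable e : rel 'I_N.

Definition simple_graph : Prop := symmetric e /\ irreflexive e.
Definition connected_graph : Prop := forall u v : 'I_N, connect e u v.
Definition bipartite : Prop :=
  exists f : 'I_N -> bool, forall u v, e u v -> f u != f v.

Definition nedges : nat := #|[set p : 'I_N * 'I_N | e p.1 p.2 && (p.1 < p.2)%N]|.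

Definition adjt (u v : 'I_N) : bool := (u == v) || e u v.
Definition nbhd (u : 'I_N) : {set 'I_N} := [set v | adjt u v].
Definition deg (u : 'I_N) : nat := #|nbhd u|.

Variable R : realType.

Definition Atilde : 'M[R]_N := \matrix_(u, v) (adjt u v)%:R.
Definition Dtilde : 'M[R]_N := diag_mx (\row_u (deg u)%:R).
Definition Gamma : 'M[R]_N := diag_mx (\row_u ((nedges%:R)^-1 ^+ deg u)).
Definition Pdrop : 'M[R]_N :=
  (1%:M - Gamma) *m (invmx Dtilde *m Atilde) + Gamma.

Definition zeta (th : 'M[bool]_N) (u : 'I_N) : nat := \sum_(v in nbhd u) th u v.
Definition ptrans (th : 'M[bool]_N) (u v : 'I_N) : R :=
  if (0 < zeta th u)%N then (th u v)%:R / (zeta th u)%:R else (u == v)%:R.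
End Graph.

Section Events.
Context {d : measure_display} {T : measurableType d} {N : nat}.
Local Open Scope classical_set_scope.
Definition Vev (V : nat -> T -> 'I_N) (l : nat) (vs : nat -> 'I_N) : set T :=
  [set w | forall k, (k <= l)%N -> V k w = vs k].
Definition Thev (Th : nat -> T -> 'M[bool]_N) (L : nat) (ths : nat -> 'M[bool]_N)
  : set T := [set w | forall k, (1 <= k <= L)%N -> Th k w = ths k].
End Events.

(* Main.v *)
Require Import Defs.
From HB Require Import structures.
From mathcomp Require Import all_boot all_order all_algebra.
From mathcomp Require Import all_classical all_reals all_analysis.
From mathcomp Require Import fingroup perm.
From mathcomp Require Import zify ring lra.
Import Order.TTheory GRing.Theory Num.Theory.
Local Open Scope ring_scope.
Local Open Scope classical_set_scope.
Set Implicit Arguments. Unset Strict Implicit.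
Section Comb.
Context (R : realFieldType) (N : nat) (D : {set 'I_N}) (q : R) (a : 'I_N).
Hypothesis aD : a \in D.

Definition Wt (f : {ffun 'I_N -> bool}) : R := \prod_(v in D) (if f v then 1 - q else q).
Definition zt (f : {ffun 'I_N -> bool}) : nat := \sum_(v in D) nat_of_bool (f v).
Definition Gt (f : {ffun 'I_N -> bool}) (b : 'I_N) : R := if (0 < zt f)%N then (nat_of_bool (f b))%:R / (zt f)%:R else (a == b)%:R.
Definition Ht (f : {ffun 'I_N -> bool}) (b : 'I_N) : R := (nat_of_bool (f b))%:R / (zt f)%:R.
Definition f0 : {ffun 'I_N -> bool} := [ffun => false].

Lemma total : \sum_(f in pffun_on false D predT) Wt f = 1.
Proof.
have := big_distr_big false (mem D) predT (fun (v : 'I_N) (j : bool) => if j then 1 - q else q).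
rewrite /Wt => <-.
rewrite big1 // => v _; rewrite big_mkcond big_bool /=; ring.
Qed.


Lemma S_off (f : {ffun 'I_N -> bool}) : f \in pffun_on false D predT -> forall v, v \notin D -> f v = false.
Proof. by move=> /familyP H v vD; have := H v; rewrite (negbTE vD) /= => /eqP. Qed.

Lemma S_in (f : {ffun 'I_N -> bool}) : (forall v, v \notin D -> f v = false) -> f \in pffun_on false D predT.
Proof. by move=> H; apply/familyP => v; case: ifP => //= vD; rewrite H ?vD. Qed.

Lemma f0S : f0 \in pffun_on false D predT.
Proof. by apply: S_in => v _; rewrite ffunE. Qed.

Lemma zt0 (f : {ffun 'I_N -> bool}) : f \in pffun_on false D predT -> (zt f == 0%N) = (f == f0).
Proof.
move=> fS; apply/idP/idP.
  rewrite /zt sum_nat_eq0 => /forall_inP H; apply/eqP/ffunP => v.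
  rewrite ffunE; case: (boolP (v \in D)) => vD; last exact: S_off.
  by have := H v vD; case: (f v).
move/eqP => ->; rewrite /zt big1 // => v _; by rewrite ffunE.
Qed.

Lemma Wt0 : Wt f0 = q ^+ #|D|.
Proof. by rewrite /Wt (eq_bigr (fun _ => q)) ?prodr_const // => v _; rewrite ffunE. Qed.

Lemma GHt (f : {ffun 'I_N -> bool}) b : f \in pffun_on false D predT ->
  Gt f b = Ht f b + (f == f0)%:R * (a == b)%:R.
Proof.
move=> fS; rewrite /Gt /Ht -zt0 //.
case: (posnP (zt f)) => [->|hz].
  by rewrite /= invr0 mulr0 mul1r add0r.
by rewrite mul0r addr0.
Qed.


Definition Xs b := \sum_(f in pffun_on false D predT) Wt f * Ht f b.

Lemma Ht_sum (f : {ffun 'I_N -> bool}) : f \in pffun_on false D predT ->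
  \sum_(c in D) Ht f c = (f != f0)%:R.
Proof.
move=> fS; rewrite /Ht -mulr_suml -natr_sum -/(zt f) -(zt0 fS).
case: (posnP (zt f)) => [->|hz]; first by rewrite mul0r.
by rewrite divff // pnatr_eq0 -lt0n.
Qed.

Section Sym.
Variables (b c : 'I_N).
Hypotheses (bD : b \in D) (cD : c \in D).
Let s := tperm b c.
Let phi (f : {ffun 'I_N -> bool}) : {ffun 'I_N -> bool} := [ffun v => f (s v)].

Lemma Ds v : (s v \in D) = (v \in D).
Proof. by rewrite /s; case: tpermP => [->|->|//]; rewrite bD cD. Qed.

Lemma phiK f : phi (phi f) = f.
Proof. by apply/ffunP => v; rewrite !ffunE tpermK. Qed.

Lemma phi_inj : injective phi.
Proof. exact: (can_inj phiK). Qed.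

Lemma Sphi1 f : f \in pffun_on false D predT -> phi f \in pffun_on false D predT.
Proof.
move=> fS; apply: S_in => v vD; rewrite ffunE; apply: (S_off fS).
by rewrite Ds.
Qed.

Lemma Sphi f : (phi f \in pffun_on false D predT) = (f \in pffun_on false D predT).
Proof.
apply/idP/idP; last exact: Sphi1.
by move=> h; rewrite -(phiK f); apply: Sphi1.
Qed.

Lemma Wphi f : Wt (phi f) = Wt f.
Proof.
rewrite /Wt [RHS](reindex_inj (@perm_inj _ s)) /=.
by apply: eq_big => v; [rewrite Ds | rewrite ffunE].
Qed.

Lemma zphi f : zt (phi f) = zt f.
Proof.
rewrite /zt [RHS](reindex_inj (@perm_inj _ s)) /=.
by apply: eq_big => v; [rewrite Ds | rewrite ffunE].
Qed.

Lemma Hphi f : Ht (phi f) b = Ht f c.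
Proof. by rewrite /Ht zphi ffunE /s tpermL. Qed.

Lemma Xsym : Xs b = Xs c.
Proof.
rewrite /Xs (reindex_inj phi_inj) /=.
by apply: eq_big => f; [rewrite Sphi | rewrite Wphi Hphi].
Qed.

End Sym.


Lemma Xsum : \sum_(c in D) Xs c = 1 - q ^+ #|D|.
Proof.
rewrite /Xs exchange_big /=.
rewrite (eq_bigr (fun f => Wt f * (f != f0)%:R)); last first.
  by move=> f fS; rewrite -mulr_sumr Ht_sum.
rewrite (bigD1 f0 f0S) /= eqxx mulr0 add0r.
rewrite (eq_bigr Wt); last by move=> f /andP[_ ->]; rewrite mulr1.
have T1 := total; rewrite (bigD1 f0 f0S) /= Wt0 in T1.
by rewrite -T1 addrC addrK.
Qed.

Lemma Xval b : b \in D -> Xs b = (1 - q ^+ #|D|) / #|D|%:R.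
Proof.
move=> bD.
have H : \sum_(c in D) Xs c = Xs b *+ #|D|.
  by rewrite (eq_bigr (fun _ => Xs b)) ?sumr_const // => c cD; rewrite (Xsym cD bD).
have hD : #|D|%:R != 0 :> R by rewrite pnatr_eq0 -lt0n card_gt0; apply/set0Pn; exists a.
rewrite Xsum -mulr_natr in H; rewrite H mulfK //.
Qed.

Lemma core b : \sum_(f in pffun_on false D predT) Wt f * Gt f b =
  (1 - q ^+ #|D|) * (b \in D)%:R / #|D|%:R + q ^+ #|D| * (a == b)%:R.
Proof.
rewrite (eq_bigr (fun f => Wt f * Ht f b + Wt f * ((f == f0)%:R * (a == b)%:R))); last first.
  by move=> f fS; rewrite GHt // mulrDr.
rewrite big_split /= -/(Xs b).
rewrite (bigD1 f0 f0S) /= eqxx Wt0 mul1r big1 ?addr0; last first.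
  by move=> f /andP[_ /negbTE ->]; rewrite mul0r mulr0.
case: (boolP (b \in D)) => bD.
  by rewrite Xval //= mulr1.
have -> : Xs b = 0.
  by rewrite /Xs; apply: big1 => f fS; rewrite /Ht (S_off fS bD) mul0r mulr0.
by rewrite /= mulr0 mul0r.
Qed.

End Comb.
Unset Implicit Arguments. Set Strict Implicit.
Lemma bigU_ordP (T : Type) n (G : 'I_n -> set T) w :
  (\big[setU/set0]_(i < n) G i) w <-> exists i, G i w.
Proof.
elim: n G => [|n IH] G.
  by rewrite big_ord0; split => [//|[[i hi]]].
rewrite big_ord_recr /=; split.
  case => [/IH [i Hi] | H]; [by exists (widen_ord (leqnSn n) i) | by exists ord_max].
move=> [i Hi]; case: (ltnP i n) => h.
  left; apply/IH; exists (Ordinal h).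
  by have -> : widen_ord (leqnSn n) (Ordinal h) = i by apply/val_inj.
right; have -> : (ord_max : 'I_n.+1) = i; last by [].
by apply/val_inj => /=; have := ltn_ord i; lia.
Qed.

Section Part.
Context {d : measure_display} {T : measurableType d} {R : realType}
  (P : probability T R).

Lemma part_fib (F : finType) (Z : T -> F) (X : set T) :
  measurable X -> (forall x, measurable [set w | Z w = x]) ->
  P X = (\sum_(x : F) P (X `&` [set w | Z w = x]))%E.
Proof.
move=> mX mZ.
rewrite (eq_bigl (fun x => x \in xpredT)) // big_enum_val.
have HX : X = \big[setU/set0]_(i < (@card F (mem (xpredT : pred F)))) (X `&` [set w | Z w = enum_val i]).
  apply/seteqP; split => w.
    move=> Xw; apply/bigU_ordP.
    exists (enum_rank (Z w)); split => //=.
    by rewrite enum_rankK.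
  by move/bigU_ordP => [i [] ].
rewrite {1}HX measure_bigsetU_ord //.
  by move=> i; apply: measurableI.
move=> i j _ _ [w [[_ h1] [_ h2]]].
by apply: enum_val_inj; rewrite -h1 -h2.
Qed.


Lemma part_pred (F : finType) (Z : T -> F) (Q : pred F) :
  (forall x, measurable [set w | Z w = x]) ->
  measurable [set w | Q (Z w)] /\
  P [set w | Q (Z w)] = (\sum_(x | Q x) P [set w | Z w = x])%E.
Proof.
move=> mZ.
have mQ : measurable [set w | Q (Z w)].
  have -> : [set w | Q (Z w)] = \big[setU/set0]_(i < (@card F (mem (xpredT : pred F))))
      (if Q (enum_val i) then [set w | Z w = enum_val i] else set0).
    apply/seteqP; split => w.
      move=> Qw; apply/bigU_ordP; exists (enum_rank (Z w)).
      by rewrite enum_rankK Qw.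
    move/bigU_ordP => [i]; case: ifP => // Qi /= ->; exact Qi.
  by apply: bigsetU_measurable => i _; case: ifP.
split => //.
rewrite (@part_fib _ _ _ mQ mZ) [RHS]big_mkcond /=.
apply: eq_bigr => x _; case: ifP => Qx.
  congr (P _); apply/seteqP; split => w; first by case.
  by move=> /= Zw; split => //; rewrite /= Zw.
rewrite (_ : _ `&` _ = set0) ?measure0 //.
by apply/seteqP; split => w // [] /= + Zw; rewrite Zw Qx.
Qed.

End Part.
Section Main.
Context (N : nat) (e : rel 'I_N) (R : realType) (d : measure_display)
  (T : measurableType d) (P : probability T R)
  (Theta : nat -> T -> 'M[bool]_N) (V : nat -> T -> 'I_N).
Hypothesis mTh : forall l th, measurable [set w | Theta l w = th].
Hypothesis mV : forall n v, measurable [set w | V n w = v].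

Definition upd (ths : nat -> 'M[bool]_N) k th := fun i => if i == k then th else ths i.

Lemma Thev0 ths : Thev Theta 0 ths = setT.
Proof. by apply/seteqP; split => w // _ k; lia. Qed.

Lemma ThevS ths j : Thev Theta j.+1 ths =
  Thev Theta j ths `&` [set w | Theta j.+1 w = ths j.+1].
Proof.
apply/seteqP; split => w /=.
  move=> H; split; last by apply: H; lia.
  by move=> k hk; apply: H; lia.
move=> [H1 H2] k hk; have [->|ne] := eqVneq k j.+1; first exact H2.
apply: H1; lia.
Qed.

Lemma Thev_upd ths j th : Thev Theta j (upd ths j.+1 th) = Thev Theta j ths.
Proof.
apply/seteqP; split => w /= H k hk; have := H k hk; rewrite /upd;
  (have -> : (k == j.+1) = false by apply/negbTE; lia); by [].
Qed.

Lemma upd_at ths j th : upd ths j th j = th.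
Proof. by rewrite /upd eqxx. Qed.

Lemma Vev0 vs : Vev V 0 vs = [set w | V 0%N w = vs 0%N].
Proof.
apply/seteqP; split => w /=; first by apply.
by move=> H k; rewrite leqn0 => /eqP ->.
Qed.

Lemma VevS vs j : Vev V j.+1 vs = Vev V j vs `&` [set w | V j.+1 w = vs j.+1].
Proof.
apply/seteqP; split => w /=.
  move=> H; split; last by apply: H.
  by move=> k hk; apply: H; lia.
move=> [H1 H2] k hk; have [->|ne] := eqVneq k j.+1; first exact H2.
apply: H1; lia.
Qed.

Lemma mThev j ths : measurable (Thev Theta j ths).
Proof.
elim: j => [|j IH]; first by rewrite Thev0.
by rewrite ThevS; apply: measurableI.
Qed.

Lemma mVev j vs : measurable (Vev V j vs).
Proof.
elim: j => [|j IH]; first by rewrite Vev0.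
by rewrite VevS; apply: measurableI.
Qed.


Lemma sum_lemma j : forall (X Y : set T) (k : R), measurable X -> measurable Y ->
  (forall ths, P (X `&` Thev Theta j ths) = (P (Y `&` Thev Theta j ths) * k%:E)%E) ->
  P X = (P Y * k%:E)%E.
Proof.
elim: j => [|j IH] X Y k mX mY H.
  by have := H (fun _ => 0); rewrite Thev0 !setIT.
have Hth th : P (X `&` [set w | Theta j.+1 w = th]) =
    (P (Y `&` [set w | Theta j.+1 w = th]) * k%:E)%E.
  apply: IH; try (apply: measurableI => //).
  move=> ths; have := H (upd ths j.+1 th); rewrite ThevS Thev_upd upd_at.
  by rewrite -!setIA ![[set w | _] `&` Thev _ _ _]setIC.
rewrite (@part_fib _ _ _ P _ (Theta j.+1) _ mX (mTh j.+1)).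
rewrite (@part_fib _ _ _ P _ (Theta j.+1) _ mY (mTh j.+1)).
rewrite ge0_sume_distrl //; apply: eq_bigr => th _; exact: Hth.
Qed.


Lemma finP (A : set T) : measurable A -> (fine (P A))%:E = P A.
Proof. by move=> mA; rewrite fineK // fin_num_measure. Qed.

Hypothesis hind : forall L ths, P (Thev Theta L ths) =
  (\prod_(1 <= k < L.+1) fine (P [set w | Theta k w = ths k]))%:E.
Hypothesis hV0 : forall L v ths, P ([set w | V 0%N w = v] `&` Thev Theta L ths) =
  (P [set w | V 0%N w = v] * P (Thev Theta L ths))%E.
Hypothesis hmk : forall l L vs ths, (1 <= l)%N -> (l <= L)%N ->
  P (Vev V l vs `&` Thev Theta L ths) =
  (P (Vev V l.-1 vs `&` Thev Theta L ths) * (ptrans e R (ths l) (vs l.-1) (vs l))%:E)%E.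

Lemma claimC L vs ths j : (j <= L)%N ->
  P (Vev V j vs `&` Thev Theta L ths) =
  (P ([set w | V 0%N w = vs 0%N] `&` Thev Theta L ths) *
   (\prod_(1 <= k < j.+1) ptrans e R (ths k) (vs k.-1) (vs k))%:E)%E.
Proof.
elim: j => [|j IH] hj.
  by rewrite Vev0 big_geq // mule1.
rewrite (hmk j.+1) //= IH; last by lia.
by rewrite [in RHS]big_nat_recr //= EFinM muleA.
Qed.

Lemma claimI m vs ths :
  P (Vev V m vs `&` Thev Theta m.+1 ths) =
  (P (Vev V m vs `&` Thev Theta m ths) *
   (fine (P [set w | Theta m.+1 w = ths m.+1]))%:E)%E.
Proof.
rewrite !claimC // !hV0 !hind big_nat_recr //=.
rewrite -(finP _ (mV 0%N (vs 0%N))) -!EFinM; congr EFin; ring.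
Qed.


Hypothesis hoff : forall l w u v, ~~ adjt e u v -> Theta l w u v = false.
Hypothesis hrow : forall l u (b : 'I_N -> bool), (1 <= l)%N ->
     P [set w | forall v, v \in nbhd e u -> Theta l w u v = b v] =
     (\prod_(v in nbhd e u)
        (if b v then 1 - (nedges e)%:R^-1 else (nedges e)%:R^-1) : R)%:E.

Definition rowf (a : 'I_N) (th : 'M[bool]_N) : {ffun 'I_N -> bool} := [ffun v => th a v].

Lemma ptransG th a b : ptrans e R th a b = Gt R (nbhd e a) a (rowf a th) b.
Proof.
rewrite /ptrans /Gt /zt /zeta /rowf ffunE.
by under [in RHS]eq_bigr do rewrite ffunE.
Qed.

Lemma Pdrop_entry a b : Pdrop e R a b =
  (1 - ((nedges e)%:R^-1) ^+ deg e a) * (adjt e a b)%:R / (deg e a)%:R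
  + ((nedges e)%:R^-1) ^+ deg e a * (a == b)%:R.
Proof.
have hM : (invmx (Dtilde e R) *m Atilde e R) a b = (adjt e a b)%:R / (deg e a)%:R.
  have hd : forall i, (deg e i)%:R != 0 :> R.
    by move=> i; rewrite pnatr_eq0 -lt0n card_gt0; apply/set0Pn; exists i; rewrite inE /adjt eqxx.
  have hU : Dtilde e R \in unitmx.
    rewrite unitmxE /Dtilde det_diag unitfE; apply/prodf_neq0 => i _; rewrite mxE; exact: hd.
  have := congr1 (fun M : 'M[R]_N => M a b) (mulKVmx hU (Atilde e R)).
  rewrite /= {2}/Dtilde mul_diag_mx !mxE => <-.
  by field; rewrite hd.
rewrite /Pdrop mxE mulmxBl mul1mx /Gamma mul_diag_mx !mxE.
rewrite !mxE in hM; rewrite hM.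
by case: (a == b) => /=; rewrite ?mulr1n ?mulr0n; field; rewrite pnatr_eq0 -lt0n card_gt0; apply/set0Pn; exists a; rewrite inE /adjt eqxx.
Qed.

Lemma Eptrans l a b : (1 <= l)%N ->
  \sum_(th : 'M[bool]_N) fine (P [set w | Theta l w = th]) * ptrans e R th a b
  = Pdrop e R a b.
Proof.
move=> hl.
set q : R := (nedges e)%:R^-1.
have aD : a \in nbhd e a by rewrite inE /adjt eqxx.
under eq_bigr do rewrite ptransG.
rewrite (partition_big (rowf a) predT) //=.
have Hf f : \sum_(th | rowf a th == f) fine (P [set w | Theta l w = th]) =
    if f \in pffun_on false (nbhd e a) predT then Wt (nbhd e a) q f else 0.
  apply: EFin_inj; rewrite -sumEFin.
  rewrite (eq_bigr (fun th => P [set w | Theta l w = th])); last first.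
    by move=> th _; rewrite finP.
  have [_ <-] := @part_pred _ _ _ P _ (Theta l) (fun th => rowf a th == f) (mTh l).
  case: ifP => fS.
    rewrite (_ : [set w | _] = [set w | forall v, v \in nbhd e a -> Theta l w a v = f v]).
      by rewrite hrow.
    apply/seteqP; split => w /=.
      by move=> /eqP <- v _; rewrite /rowf ffunE.
    move=> H; apply/eqP/ffunP => v; rewrite ffunE.
    case: (boolP (v \in nbhd e a)) => vD; first exact: H.
    rewrite (S_off fS vD); apply: hoff; by rewrite inE in vD.
  rewrite (_ : [set w | _] = set0) ?measure0 //.
  apply/seteqP; split => w //= /eqP hw.
  move: fS; rewrite -hw (S_in (D:=nbhd e a)) // => v vD.
  by rewrite ffunE; apply: hoff; rewrite inE in vD.
rewrite (eq_bigr (fun f => (if f \in pffun_on false (nbhd e a) predT then Wt (nbhd e a) q f else 0)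
   * Gt R (nbhd e a) a f b)); last first.
  move=> f _; rewrite -Hf mulr_suml; by apply: eq_bigr => th /eqP <-.
rewrite (eq_bigr (fun f => if f \in pffun_on false (nbhd e a) predT then
   Wt (nbhd e a) q f * Gt R (nbhd e a) a f b else 0)); last first.
  by move=> f _; case: ifP => _; rewrite ?mul0r.
rewrite -big_mkcond /= core // Pdrop_entry inE.
by [].
Qed.

End Main.

Section Fin.
Context (N : nat) (e : rel 'I_N) (R : realType) (d : measure_display)
  (T : measurableType d) (P : probability T R)
  (Theta : nat -> T -> 'M[bool]_N) (V : nat -> T -> 'I_N).
Hypothesis mTh : forall l th, measurable [set w | Theta l w = th].
Hypothesis mV : forall n v, measurable [set w | V n w = v].
Hypothesis hind : forall L ths, P (Thev Theta L ths) =
  (\prod_(1 <= k < L.+1) fine (P [set w | Theta k w = ths k]))%:E.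
Hypothesis hV0 : forall L v ths, P ([set w | V 0%N w = v] `&` Thev Theta L ths) =
  (P [set w | V 0%N w = v] * P (Thev Theta L ths))%E.
Hypothesis hmk : forall l L vs ths, (1 <= l)%N -> (l <= L)%N ->
  P (Vev V l vs `&` Thev Theta L ths) =
  (P (Vev V l.-1 vs `&` Thev Theta L ths) * (ptrans e R (ths l) (vs l.-1) (vs l))%:E)%E.
Hypothesis hoff : forall l w u v, ~~ adjt e u v -> Theta l w u v = false.
Hypothesis hrow : forall l u (b : 'I_N -> bool), (1 <= l)%N ->
     P [set w | forall v, v \in nbhd e u -> Theta l w u v = b v] =
     (\prod_(v in nbhd e u)
        (if b v then 1 - (nedges e)%:R^-1 else (nedges e)%:R^-1) : R)%:E.

Lemma main_sec l vs : (1 <= l)%N ->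
  P (Vev V l vs) = (P (Vev V l.-1 vs) * (Pdrop e R (vs l.-1) (vs l))%:E)%E.
Proof.
case: l => [//|m] _ /=.
set a := vs m; set b := vs m.+1.
have H1 th : P (Vev V m.+1 vs `&` [set w | Theta m.+1 w = th]) =
    (P (Vev V m vs `&` [set w | Theta m.+1 w = th]) * (ptrans e R th a b)%:E)%E.
  apply: (@sum_lemma _ _ _ _ P Theta mTh m); try apply: measurableI; try apply: mVev; try apply: mTh; try exact: mV.
  move=> ths; rewrite -!setIA ![[set w | Theta _ w = _] `&` Thev _ _ _]setIC.
  have := hmk m.+1 m.+1 vs (@upd N ths m.+1 th) erefl (leqnn _).
  by rewrite /= ThevS Thev_upd upd_at.
have H2 th : P (Vev V m vs `&` [set w | Theta m.+1 w = th]) =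
    (P (Vev V m vs) * (fine (P [set w | Theta m.+1 w = th]))%:E)%E.
  apply: (@sum_lemma _ _ _ _ P Theta mTh m); try apply: measurableI; try apply: mVev; try apply: mTh; try exact: mV.
  move=> ths; rewrite -setIA [[set w | Theta _ w = _] `&` Thev _ _ _]setIC.
  have := @claimI _ e _ _ _ P Theta V mV hind hV0 hmk m vs (@upd N ths m.+1 th).
  by rewrite ThevS Thev_upd upd_at.
rewrite (@part_fib _ _ _ P _ (Theta m.+1) _ (@mVev _ _ _ V mV _ _) (mTh m.+1)).
under eq_bigr do rewrite H1 H2.
rewrite -(@finP _ _ _ P _ (@mVev _ _ _ V mV m vs)) -(@Eptrans _ e _ _ _ P Theta mTh hoff hrow m.+1 a b) //.
under eq_bigr do rewrite -!EFinM.
by rewrite sumEFin -EFinM mulr_sumr; congr EFin; apply: eq_bigr => th _; rewrite mulrA.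
Qed.

End Fin.

Theorem theorem8 (N : nat) (e : rel 'I_N) (R : realType)
  (d : measure_display) (T : measurableType d) (P : probability T R)
  (Theta : nat -> T -> 'M[bool]_N) (V : nat -> T -> 'I_N) :
  simple_graph e -> connected_graph e -> ~ bipartite e ->
  (* measurability of the discrete random variables *)
  (forall l th, measurable [set w | Theta l w = th]) ->
  (forall n v, measurable [set w | V n w = v]) ->
  (* theta^(l)(u,v) = 0 off the edges of G~ *)
  (forall l w u v, ~~ adjt e u v -> Theta l w u v = false) ->
  (* each row of Theta^(l) has independent Bernoulli(1 - 1/|E|) entries on N(u) *)
  (forall l u (b : 'I_N -> bool), (1 <= l)%N ->
     P [set w | forall v, v \in nbhd e u -> Theta l w u v = b v] =
     (\prod_(v in nbhd e u)
        (if b v then 1 - (nedges e)%:R^-1 else (nedges e)%:R^-1) : R)%:E) ->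
  (* Theta^(1), Theta^(2), ... are identically distributed ... *)
  (forall l th, (1 <= l)%N ->
     P [set w | Theta l w = th] = P [set w | Theta 1%N w = th]) ->
  (* ... and independent *)
  (forall L ths,
     P (Thev Theta L ths) =
     (\prod_(1 <= k < L.+1) fine (P [set w | Theta k w = ths k]))%:E) ->
  (* the initial state V_0 is independent of the environment *)
  (forall L v ths,
     P ([set w | V 0%N w = v] `&` Thev Theta L ths) =
     (P [set w | V 0%N w = v] * P (Thev Theta L ths))%E) ->
  (* (V, xi) is a Markov chain in random environment:
     P(V_l = v_l | V_0..V_{l-1}, xi) = p(Theta^(l); v_{l-1}, v_l),
     stated on the generating pi-system of cylinder events of xi *)
  (forall l L vs ths, (1 <= l)%N -> (l <= L)%N ->
     P (Vev V l vs `&` Thev Theta L ths) =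
     (P (Vev V l.-1 vs `&` Thev Theta L ths) * (ptrans e R (ths l) (vs l.-1) (vs l))%:E)%E) ->
  (* conclusion: under P, V is a time-homogeneous Markov chain with matrix Pdrop *)
  forall l vs, (1 <= l)%N ->
    P (Vev V l vs) = (P (Vev V l.-1 vs) * (Pdrop e R (vs l.-1) (vs l))%:E)%E.
Proof.
move=> _ _ _ mTh mV hoff hrow _ hind hV0 hmk l vs hl.
exact: (@main_sec N e R d T P Theta V mTh mV hind hV0 hmk hoff hrow l vs hl).
Qed.
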